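(* Fix an integer $d\ge1$ and let $S_d=\langle a_0,\dots,a_d,s\mid s a_0 s^{-1}a_0^{-1},\ a_{i+1}a_ia_{i+1}^{-1}a_0^{-1}\ (0\le i<d)\rangle$. For $0\le i<j\le d$ and $n\ge1$ let $f_{i,j}(n)=\tfrac12\,\bigl|\mathrm{vrim}(\mathrm{Fan}(a_i^n,a_j^n))\bigr|$. Then $f_{i,j}(n)$ is a polynomial in $n$ of degree $j$; in fact \[ f_{i,j}(n)=\sum_{k=i+1}^{j}\binom{n+k-1}{n-1}. \]
   Context: Each relator of $S_d$ has the form $\lambda p\lambda^{-1}q^{-1}$ with $(\lambda,p,q)=(s,a_0,a_0)$ or $(a_{i+1},a_i,a_0)$. In the unit square of such a relator in the presentation complex, reading from a corner $B$: $\lambda$ goes from $B$ to $Q$, $p$ from $Q$ to the top corner $T$, $\lambda$ from $R$ to $T$, $q$ from $B$ to $R$; the edges $p,\lambda$ into $T$ are the top edges. The descending link is the graph on the generators in which $u,v$ are adjacent iff some relator square has top edges labeled $u$ and $v$; for $S_d$ it is the path $s - a_0 - a_1 - \cdots - a_d$, and each adjacent pair corresponds to a unique relator. For a relator $e$ put $x_e=q^{-1}\lambda$. Simple fans: $\mathrm{Fan}(a,a)$ is a single edge labeled $a$ (apex at its end), empty rims. For distinct generators $a,b$, let $a=v_0,\dots,v_k=b$ be the path in the descending link, take copies $C_i$ of the relator square with top edges $v_{i-1},v_i$, and glue the top edge $v_i$ of $C_i$ to that of $C_{i+1}$ ($1\le i<k$); the common top corner is the apex. The vertex rim is the concatenation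 of the two-letter words read along the bottom of $C_i$ from the initial vertex of its top edge $v_{i-1}$ to the initial vertex of its top edge $v_i$ (each is $q^{-1}\lambda$ or $\lambda^{-1}q$), so it has the form $a_1^{-1}b_1\cdots a_k^{-1}b_k$; the edge rim replaces $q^{-1}\lambda$ by $x_e$ and $\lambda^{-1}q$ by $x_e^{-1}$. Fans of height $n\ge2$: for positive words $u=au'$, $v=bv'$ of length $n$ with $a,b$ generators, let $F'=\mathrm{Fan}(u',v')$ with vertex rim $a_1^{-1}b_1\cdots a_k^{-1}b_k$, put $b_0=a$, $a_{k+1}=b$, and attach for $i=1,\dots,k+1$ the simple fan $\mathrm{Fan}(b_{i-1},a_i)$ with apex at the rim vertex where the edges $b_{i-1}$ and $a_i$ terminate (for $i=1$, the initial vertex of the side $u'$, the new edge $a$ extending that side; symmetrically for $i=k+1$), identifying its top edges with the corresponding edges. This is $\mathrm{Fan}(u,v)$; its vertex and edge rims are the concatenations of those of the attached simple fans. $|w|$ is the length of a word $w$. *)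

(* Defs.v *)
From mathcomp Require Import all_boot all_order all_algebra.
Set Implicit Arguments. Unset Strict Implicit. Unset Printing Implicit Defensive.

(* Generators of S_d:  None = s,  Some i = a_i. *)
Definition gen := option nat.
Notation gs := (@None nat).
Notation ga i := (@Some nat i).

(* A letter of a word: (generator, inverted?). *)
Definition letter := (gen * bool)%type.
Definition word := seq letter.
Definition pos (x : gen) : letter := (x, false).
Definition neg (x : gen) : letter := (x, true).

(* A relator  lambda p lambda^-1 q^-1  is recorded as the triple (lambda, p, q). *)
Definition relator := (gen * gen * gen)%type.
Definition rlam (r : relator) : gen := r.1.1.
Definition rp (r : relator) : gen := r.1.2.
Definition rq (r : relator) : gen := r.2.

Definition relator_word (r : relator) : word :=
  [:: pos (rlam r); pos (rp r); neg (rlam r); neg (rq r)].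

Definition relators (d : nat) : seq relator :=
  (gs, ga 0, ga 0) :: [seq (ga i.+1, ga i, ga 0) | i <- iota 0 d].

(* Descending link: u,v adjacent iff some relator square has top edges u,v
   (the top edges are p and lambda). *)
Definition top_edges_are (r : relator) (u v : gen) : bool :=
  ((rp r == u) && (rlam r == v)) || ((rp r == v) && (rlam r == u)).
Definition link_adj (d : nat) (u v : gen) : bool :=
  has (fun r => top_edges_are r u v) (relators d).

(* For S_d the descending link is the path s - a_0 - a_1 - ... - a_d;
   we index its vertices along the path. *)
Definition gidx (x : gen) : nat := if x is Some i then i.+1 else 0.
Definition gunidx (k : nat) : gen := if k is k'.+1 then ga k' else gs.

Definition link_path (a b : gen) : seq gen :=
  if gidx a <= gidx b then [seq gunidx k | k <- iota (gidx a) (gidx b - gidx a).+1]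
  else rev [seq gunidx k | k <- iota (gidx b) (gidx a - gidx b).+1].

Definition rel_of (d : nat) (x y : gen) : relator :=
  nth (gs, gs, gs) [seq r <- relators d | top_edges_are r x y] 0.

(* Two-letter word read along the bottom of the square of r, from the initial
   vertex of its top edge x to the initial vertex of its top edge y:
   from p to lambda it is lambda^-1 q, from lambda to p it is q^-1 lambda. *)
Definition square_word (r : relator) (x y : gen) : word :=
  if (rp r == x) && (rlam r == y) then [:: neg (rlam r); pos (rq r)]
  else [:: neg (rq r); pos (rlam r)].

Definition simple_vrim (d : nat) (a b : gen) : word :=
  let P := link_path a b in
  flatten [seq square_word (rel_of d xy.1 xy.2) xy.1 xy.2 | xy <- zip P (behead P)].

Fixpoint rim_pairs (w : word) : seq (gen * gen) :=
  match w with
  | x :: y :: t => (x.1, y.1) :: rim_pairs t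
  | _ => [::]
  end.

(* Vertex rim of Fan(u,v) for positive words u,v (given as sequences of
   generators) of the same length n >= 1. *)
Fixpoint fan_vrim (d : nat) (u v : seq gen) : word :=
  match u, v with
  | [:: a], [:: b] => simple_vrim d a b
  | a :: u', b :: v' =>
      let ps := rim_pairs (fan_vrim d u' v') in
      let bs := a :: [seq pr.2 | pr <- ps] in   (* b_0 = a, b_1, ..., b_k *)
      let as_ := rcons [seq pr.1 | pr <- ps] b in (* a_1, ..., a_k, a_{k+1} = b *)
      flatten [seq simple_vrim d xy.1 xy.2 | xy <- zip bs as_]
  | _, _ => [::]
  end.

Definition fij (d i j n : nat) : rat :=
  ((size (fan_vrim d (nseq n (ga i)) (nseq n (ga j))))%:R / 2%:R)%R.

(* Main.v *)
Require Import Defs.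
From mathcomp Require Import all_boot all_order all_algebra zify.
Import GRing.Theory Num.Theory.

Definition gw (m : nat) : word := [:: neg (ga m); pos (ga 0)].
Definition rimw (T : seq nat) : word := flatten (map gw T).

Lemma rimw_cat s t : rimw (s ++ t) = rimw s ++ rimw t.
Proof. by rewrite /rimw map_cat flatten_cat. Qed.

Lemma size_rimw T : size (rimw T) = 2 * size T.
Proof. elim: T => [|m T IH] //=. by rewrite /rimw /= -/(rimw T) IH mulnS. Qed.

Lemma rim_pairs_rimw T : rim_pairs (rimw T) = [seq (ga m, ga 0) | m <- T].
Proof. elim: T => [|m T IH] //=. by rewrite /rimw /= -/(rimw T) IH. Qed.

Lemma zip_iota x n :
  zip (iota x n.+1) (iota x.+1 n) = [seq (k, k.+1) | k <- iota x n].
Proof. elim: n x => [|n IH] x //=. by rewrite IH. Qed.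

Lemma rel_of_k d k : k < d -> rel_of d (ga k) (ga k.+1) = (ga k.+1, ga k, ga 0).
Proof.
move=> kd; rewrite /rel_of /relators /=.
rewrite /top_edges_are /rp /rlam /=.
rewrite filter_map /=.
have -> : [seq i <- iota 0 d | preim (fun i => (ga i.+1, ga i, ga 0))
   (fun r => ((r.1.2 == ga k) && (r.1.1 == ga k.+1)) || ((r.1.2 == ga k.+1) && (r.1.1 == ga k))) i]
   = [seq i <- iota 0 d | pred1 k i].
  apply: eq_filter => i /=.
  case: (eqVneq i k) => [->|ne]; first by rewrite !eqxx.
  apply/negbTE/negP => /orP[/andP[/eqP[] e _]|/andP[/eqP[] e1 /eqP[] e2]].
    by rewrite e eqxx in ne.
  lia.
rewrite filter_pred1_uniq ?iota_uniq.
- by have -> : (gs == ga k.+1) = false by []; rewrite andbF.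
- by [].
- by rewrite mem_iota add0n kd.
Qed.

Lemma simple_up d x y : x <= y -> y <= d ->
  simple_vrim d (ga x) (ga y) = rimw (iota x.+1 (y - x)).
Proof.
move=> xy yd; rewrite /simple_vrim /link_path /= ltnS xy subSS /=.
have -> : [seq gunidx k | k <- iota x.+2 (y - x)] = [seq ga k | k <- iota x.+1 (y - x)].
  by elim: (y - x) x.+1 => [|n IH] z //=; rewrite IH.
have -> : zip (ga x :: [seq ga k | k <- iota x.+1 (y - x)]) [seq ga k | k <- iota x.+1 (y - x)]
  = [seq (ga p.1, ga p.2) | p <- zip (iota x (y - x).+1) (iota x.+1 (y - x))].
  rewrite -[ga x :: _]/([seq ga k | k <- iota x (y-x).+1]).
  move: (y - x) => n; elim: n {xy} x => [|n IH] z //=.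
  by rewrite -IH.
rewrite zip_iota -map_comp /rimw.
have : all (fun k => k < d) (iota x (y - x)).
  apply/allP => k; rewrite mem_iota => /andP[_]; rewrite subnKC // => kl.
  exact: leq_trans kl yd.
move: (y - x) => n; elim: n {xy} x => [|n IH] z //= /andP[zd al].
by rewrite rel_of_k //= /square_word /rp /rlam /= !eqxx /= IH.
Qed.

Lemma fan_cons d a a' u b b' v :
  fan_vrim d (a :: a' :: u) (b :: b' :: v) =
  let ps := rim_pairs (fan_vrim d (a' :: u) (b' :: v)) in
  flatten [seq simple_vrim d xy.1 xy.2 | xy <- zip (a :: [seq pr.2 | pr <- ps])
                                                   (rcons [seq pr.1 | pr <- ps] b)].
Proof. by []. Qed.


Definition W (T : seq nat) p := \sum_(m <- T) 'C(p + m - 1, p).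

Lemma hock p m : \sum_(l <- iota 1 m) 'C(p + l - 1, p) = 'C(p + m, p.+1).
Proof.
elim: m => [|m IH]; first by rewrite big_nil bin_small // addn0.
have -> : iota 1 m.+1 = iota 1 m ++ [:: m.+1].
  by rewrite -[m.+1]addn1 iotaD add1n addn1.
rewrite big_cat IH /= big_seq1 addnS binS.
by rewrite subn1.
Qed.

Lemma W_cat s t p : W (s ++ t) p = W s p + W t p.
Proof. by rewrite /W big_cat. Qed.

Lemma W_flat T p : W (flatten (map (iota 1) T)) p = W T p.+1.
Proof.
elim: T => [|m T IH]; first by rewrite /W !big_nil.
rewrite /= W_cat IH /W hock big_cons. by rewrite addSn subn1.
Qed.

Lemma Dlem i p jj : i <= jj ->
  \sum_(i.+1 <= k < jj.+1) 'C(p + k - 1, p) + 'C(p + i, p.+1) = 'C(p + jj, p.+1).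
Proof.
move=> /subnKC <-; elim: (jj - i) => [|k IH].
  by rewrite addn0 big_geq.
rewrite addnS big_nat_recr /=; last by rewrite ltnS leq_addr.
rewrite -addnA [_ + 'C(_, _)]addnC addnA IH addnS binS addnC.
by rewrite -addnS addnS subn1 addnC.
Qed.

Lemma hock2 k n : \sum_(q < n.+1) 'C(q + k, q) = 'C(n.+1 + k, n).
Proof.
elim: n => [|n IH]; first by rewrite big_ord1 !bin0.
by rewrite big_ord_recr /= IH [n.+2 + k]addSn binS addnC.
Qed.

Section R.
Variables (d i j : nat).
Fixpoint Rseq (n : nat) : seq nat :=
  if n is n'.+1 then i.+1 :: flatten (map (iota 1) (behead (Rseq n'))) ++ iota 1 j
  else iota i.+1 (j - i).

Hypotheses (ij : i < j) (jd : j <= d).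

Lemma Rshape n : exists T, Rseq n = i.+1 :: T /\ all (fun m => m <= j) T.
Proof.
elim: n => [|n [T [e al]]] /=.
  exists (iota i.+2 (j - i.+1)); split.
    by rewrite -(subnSK ij).
  apply/allP => m; rewrite mem_iota => /andP[_]; lia.
exists (flatten (map (iota 1) (behead (Rseq n))) ++ iota 1 j); split => //.
rewrite all_cat; apply/andP; split; last first.
  by apply/allP => m; rewrite mem_iota add1n ltnS => /andP[_].
rewrite e /=; elim: T al {e} => [|m T IH] //= /andP[mj al].
rewrite all_cat IH // andbT; apply/allP => k; rewrite mem_iota add1n ltnS => /andP[_ km].
exact: leq_trans km mj.
Qed.

Lemma fanR n : fan_vrim d (nseq n.+1 (ga i)) (nseq n.+1 (ga j)) = rimw (Rseq n).
Proof.
elim: n => [|n IH].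
  by rewrite /= simple_up // ltnW.
have [T [e al]] := Rshape n.
rewrite [nseq _ _]/= [nseq n.+2 _]/= fan_cons IH e rim_pairs_rimw /=.

rewrite e /= (@simple_up d i i.+1 (leqnSn i)) ?(leq_trans ij jd) // subSnn /=.
rewrite /rimw /= -/rimw; do 2 congr (_ :: _).
elim: T al {e} => [|m T IHT] /= => [_|/andP[mj al]].
  by rewrite cats0 simple_up // subn0.
rewrite simple_up ?(leq_trans mj jd) // subn0 IHT // /= -catA;
by rewrite -/(rimw _) -rimw_cat.
Qed.

Definition D q := \sum_(i.+1 <= k < j.+1) 'C(q + k - 1, q).

Lemma WR n p : W (Rseq n) p = \sum_(q < n.+1) D (p + q).
Proof.
elim: n p => [|n IH] p.
  by rewrite big_ord1 addn0 /W /D /index_iota subSS.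
have [T [e _]] := Rshape n.
rewrite /= e /= {1}/W big_cons -/(W _ _) W_cat W_flat /W hock -/(W _ _).
have := IH p.+1; rewrite e /W big_cons -/(W _ _) => IH'.
rewrite big_ord_recl addn0.
have -> : \sum_(q < n.+1) D (p + bump 0 q) = \sum_(q < n.+1) D (p.+1 + q).
  by apply: eq_bigr => q _; rewrite addSn addnS.
rewrite -IH'.
have := @Dlem i p j (ltnW ij); rewrite -/(D p).
have := binS (p + i) p.
rewrite !addnS !subn1 /= !addSn.
lia.
Qed.
End R.

Lemma rising n k : \prod_(0 <= l < k) (n.+1 + l) = 'C(n + k, n) * k`!.
Proof.
elim: k => [|k IH]; first by rewrite big_geq // addn0 binn.
rewrite big_nat_recr //= IH factS.
have := mul_bin_down (n + k).+1 n.
rewrite /= (_ : (n + k).+1 - n = k.+1); last lia.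
rewrite addnS addSn mulnA [_ * k.+1]mulnC => <-.
by rewrite mulnAC [_ * (n + k).+1]mulnC.
Qed.

Lemma fij_eq d i j n : (i < j)%N -> (j <= d)%N -> (1 <= n)%N ->
  fij d i j n = ((\sum_(i.+1 <= k < j.+1) 'C(n + k - 1, n - 1))%:R)%R.
Proof.
move=> ij jd; case: n => // n _.
rewrite /fij (@fanR d i j ij jd n) size_rimw natrM mulrC mulKf ?pnatr_eq0 //.
congr (_%:R)%R.
have -> : size (Rseq i j n) = W (Rseq i j n) 0.
  by rewrite /W; under eq_bigr do rewrite bin0; rewrite sum1_size.
rewrite (@WR d i j ij jd) /D exchange_big /=.
rewrite big_nat [in RHS]big_nat; apply: eq_bigr => -[|k] /andP[lt _] //.
rewrite subn1 addnS subn1 /= -(hock2 k n); apply: eq_bigr => q _.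
by rewrite add0n addnS subn1.
Qed.

Local Open Scope ring_scope.

Definition Fk (k : nat) : {poly rat} :=
  (k`!%:R)^-1 *: \prod_(0 <= l < k) ('X + (l%:R)%:P).

Lemma size_Fk k : size (Fk k) = k.+1.
Proof.
rewrite /Fk size_scale ?invr_eq0 ?pnatr_eq0 -?lt0n ?fact_gt0 //.
have -> : \prod_(0 <= l < k) ('X + ((l%:R : rat))%:P)
        = \prod_(l <- index_iota 0 k) ('X - (- (l%:R : rat))%:P).
  by apply: eq_bigr => l _; rewrite polyCN opprK.
by rewrite size_prod_XsubC /index_iota subn0 size_iota.
Qed.

Lemma Fk_eval k n : (Fk k).[n.+1%:R] = ('C(n + k, n))%:R.
Proof.
rewrite /Fk hornerZ horner_prod.
have -> : \prod_(0 <= l < k) ('X + ((l%:R : rat))%:P).[n.+1%:R]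
        = (\prod_(0 <= l < k) (n.+1 + l)%N)%:R.
  by rewrite natr_prod; apply: eq_bigr => l _; rewrite hornerD hornerX hornerC natrD.
by rewrite rising natrM mulrC mulfK // pnatr_eq0 -lt0n fact_gt0.
Qed.

Theorem mainTheorem5 (d i j : nat) :
  (1 <= d)%N -> (i < j)%N -> (j <= d)%N ->
  (exists p : {poly rat}, size p = j.+1 /\
     forall n : nat, (1 <= n)%N -> p.[n%:R] = fij d i j n)%R /\
  (forall n : nat, (1 <= n)%N ->
     fij d i j n = (\sum_(i.+1 <= k < j.+1) 'C(n + k - 1, n - 1))%:R)%R.
Proof.
move=> _ ij jd; split; last by move=> n; exact: fij_eq.
exists (\sum_(i.+1 <= k < j.+1) Fk k); split.
  rewrite big_nat_recr //= addrC size_polyDl size_Fk // ltnS.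
  rewrite big_seq; apply: (big_ind (fun q : {poly rat} => (size q <= j)%N)).
  - by rewrite size_poly0.
  - by move=> x y hx hy; apply: leq_trans (size_polyD _ _) _; rewrite geq_max hx hy.
  - by move=> k; rewrite mem_index_iota size_Fk => /andP[_].
move=> [|n] // _; rewrite fij_eq // horner_sum natr_sum.
apply: eq_bigr => k _; rewrite Fk_eval subn1 /=.
by rewrite subn1.
Qed.
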